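(* Let $\mathscr{R}_1, \mathscr{R}_2$ be von Neumann algebras acting on a Hilbert space $\mathscr{H}$, and let $A$ be an operator in $\mathscr{R}_1\cap\mathscr{R}_2$. Then $\mathscr{R}_1A\cap\mathscr{R}_2 = \mathscr{R}_1A\cap\mathscr{R}_2A = (\mathscr{R}_1\cap\mathscr{R}_2)A$.
   Context: For a set $\mathscr{M}$ of operators and an operator $A$, $\mathscr{M}A = \{MA : M\in\mathscr{M}\}$. *)

(* Defs.v *)
From HB Require Import structures.
From mathcomp Require Import all_boot all_order all_algebra.
From mathcomp Require Import complex.
From mathcomp Require Import classical_sets reals.
Set Implicit Arguments. Unset Strict Implicit. Unset Printing Implicit Defensive.
Import Order.TTheory GRing.Theory Num.Theory.
Local Open Scope ring_scope.
Local Open Scope classical_set_scope.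

Section Hilbert.
Variable R : realType.
Local Notation C := (R[i])%C.
Variable H : lmodType C.
Variable ip : H -> H -> C.  (* inner product, linear in the first variable *)

Definition hnorm (x : H) : C := sqrtC (ip x x).

Record is_hilbert_space : Prop := {
  ip_linear : forall (a : C) (x y z : H), ip (a *: x + y) z = a * ip x z + ip y z;
  ip_conj : forall x y : H, ip y x = (ip x y)^*;
  ip_ge0 : forall x : H, 0 <= ip x x;
  ip_eq0 : forall x : H, ip x x = 0 -> x = 0;
  ip_complete : forall u : nat -> H,
    (forall eps : C, 0 < eps -> exists N : nat, forall m n : nat,
        (N <= m)%N -> (N <= n)%N -> hnorm (u m - u n) < eps) ->
    exists l : H, forall eps : C, 0 < eps -> exists N : nat, forall n : nat,
        (N <= n)%N -> hnorm (u n - l) < eps }.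

Definition bounded_operator (T : H -> H) : Prop :=
  (forall (a : C) (x y : H), T (a *: x + y) = a *: T x + T y) /\
  exists k : C, 0 <= k /\ forall x : H, hnorm (T x) <= k * hnorm x.

Definition is_adjoint (T S : H -> H) : Prop :=
  forall x y : H, ip (T x) y = ip x (S y).

Definition in_so_closure (M : set (H -> H)) (T : H -> H) : Prop :=
  forall (xs : seq H) (eps : C), 0 < eps ->
    exists2 S, M S & forall x, x \in xs -> hnorm (T x - S x) < eps.

Record von_neumann_algebra (M : set (H -> H)) : Prop := {
  vn_bounded : forall T, M T -> bounded_operator T;
  vn_id : M id;
  vn_add : forall S T, M S -> M T -> M (fun x => S x + T x);
  vn_scale : forall (a : C) T, M T -> M (fun x => a *: T x);
  vn_mul : forall S T, M S -> M T -> M (S \o T);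
  vn_adj : forall T, M T -> exists2 S, M S & is_adjoint T S;
  vn_so_closed : forall T, bounded_operator T -> in_so_closure M T -> M T }.

End Hilbert.

Definition rmul_set (H : Type) (M : set (H -> H)) (A : H -> H) : set (H -> H) :=
  [set S \o A | S in M].

(* Main.v *)
Require Import Defs.
From HB Require Import structures.
From mathcomp Require Import all_boot all_order all_algebra.
From mathcomp Require Import complex.
From mathcomp Require Import classical_sets reals.
From mathcomp Require Import ring.

Module P1.
Set Implicit Arguments. Unset Strict Implicit. Unset Printing Implicit Defensive.
Import Order.TTheory GRing.Theory Num.Theory.
Local Open Scope ring_scope.

Section Basics.
Variable R : realType.
Local Notation C := (R[i])%C.
Variable H : lmodType C.
Variable ip : H -> H -> C.
Hypothesis hH : is_hilbert_space ip.

Definition nsq (x : H) := ip x x.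

Lemma ipDl x y z : ip (x + y) z = ip x z + ip y z.
Proof. by rewrite -[x in LHS]scale1r (ip_linear hH) mul1r. Qed.

Lemma ip0l z : ip 0 z = 0.
Proof.
have h := ipDl 0 0 z; rewrite addr0 in h.
by apply: (addrI (ip 0 z)); rewrite addr0 -h.
Qed.

Lemma ipZl a x z : ip (a *: x) z = a * ip x z.
Proof. by rewrite -[a *: x]addr0 (ip_linear hH) ip0l addr0. Qed.

Lemma ipNl x z : ip (- x) z = - ip x z.
Proof. by rewrite -scaleN1r ipZl mulN1r. Qed.

Lemma ipBl x y z : ip (x - y) z = ip x z - ip y z.
Proof. by rewrite ipDl ipNl. Qed.

Lemma ipC x y : ip x y = (ip y x)^*.
Proof. exact: (ip_conj hH). Qed.

Lemma ipDr x y z : ip x (y + z) = ip x y + ip x z.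
Proof. by rewrite ipC ipDl rmorphD /= -!ipC. Qed.

Lemma ipZr a x z : ip x (a *: z) = a^* * ip x z.
Proof. by rewrite ipC ipZl rmorphM /= -ipC. Qed.

Lemma ip0r z : ip z 0 = 0.
Proof. by rewrite ipC ip0l rmorph0 /=. Qed.

Lemma ipNr x z : ip x (- z) = - ip x z.
Proof. by rewrite ipC ipNl rmorphN /= -ipC. Qed.

Lemma ipBr x y z : ip x (y - z) = ip x y - ip x z.
Proof. by rewrite ipDr ipNr. Qed.

Lemma nsq_ge0 x : 0 <= nsq x.
Proof. exact: (ip_ge0 hH). Qed.

Lemma nsq_real x : nsq x \is Num.real.
Proof. exact: ger0_real (nsq_ge0 x). Qed.

Lemma nsq_eq0 x : nsq x = 0 -> x = 0.
Proof. exact: (ip_eq0 hH). Qed.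

Lemma nsqN x : nsq (- x) = nsq x.
Proof. by rewrite /nsq ipNl ipNr opprK. Qed.

Lemma nsqD x y : nsq (x + y) = nsq x + nsq y + (ip x y + ip y x).
Proof. rewrite /nsq !ipDl !ipDr; ring. Qed.

Lemma nsqB x y : nsq (x - y) = nsq x + nsq y - (ip x y + ip y x).
Proof. by rewrite nsqD nsqN ipNr ipNl; ring. Qed.

Lemma nsqZ a x : nsq (a *: x) = a * a^* * nsq x.
Proof. by rewrite /nsq ipZl ipZr mulrA. Qed.

Lemma nsq_par x y : nsq (x + y) <= 2%:R * (nsq x + nsq y).
Proof.
have e : nsq (x + y) + nsq (x - y) = 2%:R * (nsq x + nsq y).
  by rewrite nsqD nsqB; ring.
by rewrite -e lerDl nsq_ge0.
Qed.

Lemma hnorm_lt x (e : C) : 0 < e -> (hnorm ip x < e) = (nsq x < e ^+ 2).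
Proof.
move=> e0; rewrite /hnorm.
have -> : (sqrtC (ip x x) < e) = (sqrtC (ip x x) < sqrtC (e ^+ 2)).
  by rewrite sqrCK // ltW.
rewrite ltr_sqrtC //.
  by rewrite qualifE; exact: nsq_ge0.
rewrite qualifE; apply: exprn_ge0; exact: ltW.
Qed.

End Basics.

End P1.
Import P1.

Module P2.
Import P1.
Set Implicit Arguments. Unset Strict Implicit. Unset Printing Implicit Defensive.
Import Order.TTheory GRing.Theory Num.Theory.
Local Open Scope ring_scope.

Section RealsC.
Variable R : realType.
Local Notation C := (R[i])%C.

Lemma le_eps (x y : C) : x \is Num.real -> y \is Num.real ->
  (forall e : C, 0 < e -> x <= y + e) -> x <= y.
Proof.
move=> xr yr h; rewrite real_leNgt //; apply/negP => yx.
have d0 : 0 < (x - y) / 2%:R by rewrite divr_gt0 // subr_gt0.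
have := h _ d0; rewrite -lerBlDl.
have : (x - y) / 2%:R < x - y.
  by rewrite ltr_pdivrMr // ltr_pMr ?subr_gt0 // ltr1n.
by move=> lt le; have := lt_le_trans lt le; rewrite ltxx.
Qed.

Lemma archC (x : C) : 0 <= x -> exists n : nat, x < n%:R.
Proof.
move=> x0; have im0 := ger0_Im x0.
have rx0 : 0 <= complex.Re x by move: x0; rewrite lecE => /andP[].
exists (Num.Def.archi_bound (complex.Re x)).
rewrite -(rmorph_nat (real_complex R)) ltcE /= im0 eqxx /=.
exact: archi_boundP.
Qed.

Lemma mono_le (b : nat -> C) : (forall j, b j.+1 <= b j) ->
  forall n m, (n <= m)%N -> b m <= b n.
Proof.
move=> hb n m /subnK <-; elim: (m - n)%N => [|k IH]; first by rewrite add0n.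
by rewrite addSn; apply: le_trans (hb _) IH.
Qed.

Lemma mono_cauchy (b : nat -> C) : (forall j, 0 <= b j) ->
  (forall j, b j.+1 <= b j) ->
  forall e : C, 0 < e -> exists N, forall m, (N <= m)%N -> b N - b m < e.
Proof.
move=> b0 hb e e0; apply: boolp.contrapT => hn.
have hn' : forall N, exists m, (N <= m)%N /\ e <= b N - b m.
  move=> N; apply: boolp.contrapT => hc; apply: hn; exists N => m Nm.
  rewrite real_ltNge ?realB ?ger0_real ?(ltW e0) //; apply/negP => le.
  by apply: hc; exists m.
have hk : forall k : nat, exists m, k%:R * e <= b 0%N - b m.
  elim=> [|k [m hm]]; first by exists 0%N; rewrite mul0r subrr.
  have [m' [mm' hm']] := hn' m; exists m'.
  rewrite mulrSr mulrDl mul1r.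
  have -> : b 0%N - b m' = (b 0%N - b m) + (b m - b m') by ring.
  exact: lerD.
have [n hn0] := archC (divr_ge0 (b0 0%N) (ltW e0)).
have [m hm] := hk n.
have : b 0%N < n%:R * e by rewrite -ltr_pdivrMr.
move=> lt; have := lt_le_trans lt hm.
rewrite ltrBrDr gtrDl => bm; have := lt_le_trans bm (b0 m); by rewrite ltxx.
Qed.

End RealsC.

End P2.
Import P2.

Module P3.
Import P1 P2.
Set Implicit Arguments. Unset Strict Implicit. Unset Printing Implicit Defensive.
Import Order.TTheory GRing.Theory Num.Theory.
Local Open Scope ring_scope.

Section Limits.
Variable R : realType.
Local Notation C := (R[i])%C.
Variable H : lmodType C.
Variable ip : H -> H -> C.
Hypothesis hH : is_hilbert_space ip.
Local Notation nsq := (nsq ip).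

Definition conv (u : nat -> H) l := forall e : C, 0 < e ->
  exists N, forall n, (N <= n)%N -> nsq (u n - l) < e.

Lemma conv_of1 u l w p (k : C) : conv u l -> 0 <= k ->
  (forall n, nsq (w n - p) <= k * nsq (u n - l)) -> conv w p.
Proof.
move=> cu k0 hw e e0.
have k1 : 0 < k + 1 by rewrite ltr_wpDl.
have [N hN] := cu (e / (k + 1)) (divr_gt0 e0 k1).
exists N => n Nn; apply: le_lt_trans (hw n) _.
apply: (@le_lt_trans _ _ ((k + 1) * nsq (u n - l))).
  by rewrite ler_wpM2r ?(nsq_ge0 hH) // lerDl.
by rewrite -ltr_pdivlMl // mulrC hN.
Qed.

Lemma conv_of2 u l v m w p : conv u l -> conv v m ->
  (forall n, nsq (w n - p) <= 2%:R * (nsq (u n - l) + nsq (v n - m))) ->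
  conv w p.
Proof.
move=> cu cv hw e e0.
have e4 : 0 < e / 4%:R by rewrite divr_gt0.
have [N1 h1] := cu _ e4; have [N2 h2] := cv _ e4.
exists (maxn N1 N2) => n; rewrite geq_max => /andP[n1 n2].
apply: le_lt_trans (hw n) _.
have -> : e = 2%:R * (e / 4%:R + e / 4%:R).
  by field.
by rewrite ltr_pM2l // ltrD // ?h1 ?h2.
Qed.

Lemma conv_unique u l l' : conv u l -> conv u l' -> l = l'.
Proof.
move=> c1 c2; apply/eqP; rewrite -subr_eq0; apply/eqP; apply: (nsq_eq0 hH).
apply/le_anti; rewrite (nsq_ge0 hH) andbT.
apply: le_eps; rewrite ?(nsq_real hH) ?real0 // => e e0; rewrite add0r.
have c3 : conv (fun n => l - u n) 0.
  move=> e' e'0; have [N hN] := c1 e' e'0; exists N => n /hN.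
  by rewrite subr0 -(nsqN hH) opprB.
have c4 := @conv_of2 _ _ _ _ (fun n => l - l') 0 c3 c2.
have : conv (fun n => l - l') 0.
  apply: c4 => n; rewrite !subr0.
  have -> : l - l' = (l - u n) + (u n - l') by rewrite addrA subrK.
  exact: (nsq_par hH).
move=> /(_ e e0) [N /(_ N (leqnn N))]; rewrite subr0 => /ltW //.
Qed.

Lemma conv_lin u l v m (a : C) : conv u l -> conv v m ->
  conv (fun n => a *: u n + v n) (a *: l + m).
Proof.
move=> cu cv.
have ca : conv (fun n => a *: u n) (a *: l).
  apply: (@conv_of1 u l _ _ (a * a^*) cu (mul_conjC_ge0 a)) => n.
  by rewrite -scalerBr (nsqZ hH).
apply: (conv_of2 ca cv) => n.
have -> : a *: u n + v n - (a *: l + m) = (a *: u n - a *: l) + (v n - m).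
  by rewrite opprD addrACA.
exact: (nsq_par hH).
Qed.

Lemma conv_shift u l : conv u l -> conv (fun n => u n.+1) l.
Proof. by move=> cu e e0; have [N hN] := cu e e0; exists N => n Nn; apply: hN; apply: leqW. Qed.

Lemma conv_const l : conv (fun _ => l) l.
Proof. by move=> e e0; exists 0%N => n _; rewrite subrr /P1.nsq ip0l. Qed.

Lemma complete u : (forall e : C, 0 < e -> exists N, forall m n, (N <= m)%N ->
   (N <= n)%N -> nsq (u m - u n) < e) -> exists l, conv u l.
Proof.
move=> hc.
have [l hl] : exists l : H, forall eps : C, 0 < eps -> exists N : nat,
   forall n : nat, (N <= n)%N -> hnorm ip (u n - l) < eps.
  apply: (ip_complete hH) => eps eps0.
  have [N hN] := hc (eps ^+ 2) (exprn_gt0 _ eps0).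
  by exists N => m n Nm Nn; rewrite (hnorm_lt hH _ eps0) hN.
exists l => e e0.
have s0 : 0 < sqrtC e by rewrite sqrtC_gt0.
have [N hN] := hl _ s0; exists N => n /hN; by rewrite (hnorm_lt hH _ s0) sqrtCK.
Qed.

Definition linop (T : H -> H) := forall a x y, T (a *: x + y) = a *: T x + T y.

Section Lin.
Variable T : H -> H.
Hypothesis hT : linop T.
Lemma linD x y : T (x + y) = T x + T y.
Proof. by rewrite -[x]scale1r hT !scale1r. Qed.
Lemma lin0 : T 0 = 0.
Proof. by have h := linD 0 0; rewrite addr0 in h; apply: (addrI (T 0)); rewrite addr0 -h. Qed.
Lemma linZ a x : T (a *: x) = a *: T x.
Proof. by rewrite -[a *: x]addr0 hT lin0 addr0. Qed.
Lemma linN x : T (- x) = - T x.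
Proof. by rewrite -scaleN1r linZ scaleN1r. Qed.
Lemma linB x y : T (x - y) = T x - T y.
Proof. by rewrite linD linN. Qed.
End Lin.

Lemma bnd_lin T : bounded_operator ip T -> linop T.
Proof. by case. Qed.

Lemma bnd_sq T : bounded_operator ip T ->
  exists k, 0 <= k /\ forall x, nsq (T x) <= k * nsq x.
Proof.
move=> [_ [k [k0 hk]]]; exists (k ^+ 2); split; first exact: exprn_ge0.
move=> x; have := hk x; rewrite /hnorm => le.
rewrite -[nsq (T x)]sqrtCK -[nsq x]sqrtCK -exprMn.
have s1 : 0 <= sqrtC (nsq (T x)) by rewrite sqrtC_ge0 (nsq_ge0 hH).
have s2 : 0 <= k * sqrtC (nsq x) by rewrite mulr_ge0 // sqrtC_ge0 (nsq_ge0 hH).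
by rewrite ler_pXn2r.
Qed.

Lemma mk_bounded T k : linop T -> 0 <= k ->
  (forall x, nsq (T x) <= k ^+ 2 * nsq x) -> bounded_operator ip T.
Proof.
move=> lT k0 hk; split=> //; exists k; split=> // x.
have s2 : 0 <= k * sqrtC (nsq x) by rewrite mulr_ge0 // sqrtC_ge0 (nsq_ge0 hH).
rewrite /hnorm -[X in _ <= X](sqrCK s2) exprMn sqrtCK.
have h1 : nsq (T x) \is Num.nneg by rewrite qualifE; exact: (nsq_ge0 hH).
have h2 : k ^+ 2 * nsq x \is Num.nneg.
  by rewrite qualifE; apply: mulr_ge0; [exact: exprn_ge0 | exact: (nsq_ge0 hH)].
by rewrite (ler_sqrtC h1 h2).
Qed.

Lemma so_approx (M : set (H -> H)) (F : nat -> H -> H) (G : H -> H) :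
  (forall x, conv (fun n => F n x) (G x)) -> (forall n, M (F n)) ->
  in_so_closure ip M G.
Proof.
move=> cF MF xs eps eps0.
have e2 : 0 < eps ^+ 2 by apply: exprn_gt0.
have [N hN] : exists N, forall x, x \in xs -> forall n, (N <= n)%N ->
    nsq (F n x - G x) < eps ^+ 2.
  elim: xs => [|a xs [N IH]]; first by exists 0%N.
  have [N1 h1] := cF a _ e2.
  exists (maxn N1 N) => x; rewrite inE => /orP [/eqP -> | xin] n;
    rewrite geq_max => /andP[n1 n2]; [exact: h1 | exact: IH].
exists (F N) => // x xin.
by rewrite (hnorm_lt hH _ eps0) -(nsqN hH) opprB; apply: hN.
Qed.

End Limits.

End P3.
Import P3.

Module P4.
Import P1 P2 P3.
Set Implicit Arguments. Unset Strict Implicit. Unset Printing Implicit Defensive.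
Import Order.TTheory GRing.Theory Num.Theory.
Local Open Scope ring_scope.

Section Op.
Variable R : realType.
Local Notation C := (R[i])%C.
Variable H : lmodType C.
Variable ip : H -> H -> C.
Hypothesis hH : is_hilbert_space ip.
Local Notation nsq := (nsq ip).
Local Notation linop := (@linop R H).
Local Notation conv := (conv ip).

Variables A As : H -> H.
Hypothesis hadj : is_adjoint ip A As.
Hypothesis lA : linop A.
Hypothesis lAs : linop As.
Variables kA kS : C.
Hypothesis kA0 : 0 <= kA.
Hypothesis kS0 : 0 <= kS.
Hypothesis hkA : forall x, nsq (A x) <= kA * nsq x.
Hypothesis hkS : forall x, nsq (As x) <= kS * nsq x.

Definition cc := (1 + kA + kS)^-1.
Definition PP y := cc *: A (As y).
Definition KK y := y - PP y.
Definition Kn n := iter n KK.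
Fixpoint Sn n y := if n is n'.+1 then y + KK (Sn n' y) else 0.

Lemma cpos : 0 < 1 + kA + kS.
Proof. by rewrite -addrA; apply: (lt_le_trans ltr01); rewrite lerDl addr_ge0. Qed.

Lemma cc_gt0 : 0 < cc.
Proof. by rewrite invr_gt0 cpos. Qed.

Lemma cc_real : cc^* = cc.
Proof. by apply: conj_Creal; apply: gtr0_real cc_gt0. Qed.

Lemma cc1 : cc * (1 + kA + kS) = 1.
Proof. by rewrite mulVf // gt_eqF // cpos. Qed.

Lemma cc_kA : cc * kA <= 1.
Proof.
have h : kA <= 1 + kA + kS.
  by rewrite -addrA addrCA lerDl addr_ge0 // ler01.
by rewrite -cc1; apply: ler_wpM2l => //; apply: ltW cc_gt0.
Qed.

Lemma cc_kS : cc * kS <= 1.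
Proof.
have h : kS <= 1 + kA + kS by rewrite addrC lerDl addr_ge0 // ler01.
by rewrite -cc1; apply: ler_wpM2l => //; apply: ltW cc_gt0.
Qed.

Lemma adjr x y : ip (As x) y = ip x (A y).
Proof. by rewrite (ipC hH) -hadj -(ipC hH). Qed.

Lemma linP : linop PP.
Proof. by move=> a x y; rewrite /PP lAs lA scalerDr scalerA mulrC -scalerA. Qed.

Lemma linK : linop KK.
Proof.
move=> a x y; rewrite /KK linP scalerBr; rewrite opprD addrACA //.
Qed.

Lemma linKn n : linop (Kn n).
Proof.
elim: n => [|n IH] a x y //=; rewrite /Kn /= in IH *.
by rewrite IH linK.
Qed.

Lemma PK w : PP (KK w) = KK (PP w).
Proof. by rewrite /KK (linB linP). Qed.

Lemma ipPl u v : ip (PP u) v = cc * ip (As u) (As v).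
Proof. by rewrite /PP (ipZl hH) hadj. Qed.

Lemma ipPr u v : ip u (PP v) = cc * ip (As u) (As v).
Proof. by rewrite /PP (ipZr hH) cc_real adjr. Qed.

Lemma selfK u v : ip (KK u) v = ip u (KK v).
Proof. by rewrite /KK (ipBl hH) (ipBr hH) ipPl ipPr. Qed.

Lemma KKn n y : KK (Kn n y) = Kn n (KK y).
Proof. by rewrite /Kn -iterS iterSr. Qed.

Lemma selfKn n u v : ip (Kn n u) v = ip u (Kn n v).
Proof.
elim: n u v => [|n IH] u v //=.
rewrite /Kn /= -/(Kn n u) selfK IH -KKn //.
Qed.

Lemma ipKv v : ip (KK v) v = nsq v - cc * nsq (As v).
Proof. by rewrite /KK (ipBl hH) ipPl. Qed.

Lemma F1 v : 0 <= ip (KK v) v.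
Proof.
rewrite ipKv subr_ge0; apply: (le_trans (ler_wpM2l (ltW cc_gt0) (hkS v))).
rewrite mulrA -[X in _ <= X]mul1r ler_wpM2r ?(nsq_ge0 hH) //; exact: cc_kS.
Qed.

Lemma F2 v : ip (KK v) v <= nsq v.
Proof.
by rewrite ipKv gerBl mulr_ge0 ?(nsq_ge0 hH) ?ltW ?cc_gt0.
Qed.

Lemma F3 v : nsq (KK v) <= ip (KK v) v.
Proof.
rewrite ipKv /KK (nsqB hH) ipPl ipPr /PP (nsqZ hH) cc_real.
set w := As v.
have : cc * cc * nsq (A w) <= cc * nsq w.
  rewrite -mulrA; apply: ler_wpM2l; first exact: ltW cc_gt0.
  apply: (le_trans (ler_wpM2l (ltW cc_gt0) (hkA w))).
  rewrite mulrA -[X in _ <= X]mul1r; apply: ler_wpM2r; [exact: (nsq_ge0 hH)| exact: cc_kA].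
rewrite /P1.nsq => h.
have -> : ip v v + cc * cc * ip (A w) (A w) - (cc * ip w w + cc * ip w w)
  = ip v v - cc * ip w w - (cc * ip w w - cc * cc * ip (A w) (A w)) by ring.
by rewrite gerBl subr_ge0.
Qed.

Definition bb y j := ip (Kn j y) y.

Lemma bb_even y i : bb y (i + i) = nsq (Kn i y).
Proof. by rewrite /bb /Kn iterD -/(Kn i _) selfKn. Qed.

Lemma bb_odd y i : bb y (i + i).+1 = ip (KK (Kn i y)) (Kn i y).
Proof.
rewrite /bb /Kn iterS iterD -/(Kn i (Kn i y)) -/(Kn i y) KKn selfKn //.
Qed.

Lemma bb_ge0 y j : 0 <= bb y j.
Proof.
rewrite -(odd_double_half j) -addnn; case: (odd j) => /=.
  by rewrite add1n bb_odd F1.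
by rewrite add0n bb_even (nsq_ge0 hH).
Qed.

Lemma bb_decr y j : bb y j.+1 <= bb y j.
Proof.
rewrite -(odd_double_half j) -addnn; case: (odd j) => /=.
  rewrite add1n; set i := j./2.
  have -> : (i + i).+2 = (i.+1 + i.+1)%N by rewrite addnS addSn.
  by rewrite bb_odd bb_even /Kn iterS -/(Kn i y) F3.
by rewrite add0n bb_odd bb_even F2.
Qed.

Lemma bb_real y j : bb y j \is Num.real.
Proof. exact: ger0_real (bb_ge0 y j). Qed.

Lemma Kn_diff y n m : nsq (Kn n y - Kn m y) = bb y (n + n) + bb y (m + m) - (bb y (n + m) + bb y (n + m)).
Proof.
rewrite (nsqB hH) -!bb_even; congr (_ - (_ + _)).
  by rewrite -selfKn /bb /Kn -iterD addnC.
by rewrite -selfKn /bb /Kn -iterD.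
Qed.

Lemma Kn_cauchy y : exists z, conv (fun n => Kn n y) z.
Proof.
apply: (complete hH) => e e0.
have [N hN] := mono_cauchy (bb_ge0 y) (bb_decr y) e0.
exists N.
suff h : forall n m, (N <= n)%N -> (n <= m)%N -> nsq (Kn n y - Kn m y) < e.
  move=> m n Nm Nn; case: (leqP m n) => mn; first exact: h.
  by rewrite -(nsqN hH) opprB; apply: h => //; apply: ltnW.
move=> n m Nn nm; rewrite Kn_diff.
apply: (@le_lt_trans _ _ (bb y N - bb y (m + m))); last first.
  by apply: hN; apply: leq_trans (leq_addr _ _); apply: leq_trans nm.
have h1 : bb y (m + m) <= bb y (n + m) by apply: mono_le; [exact: bb_decr| rewrite leq_add2r].
have h2 : bb y (n + n) <= bb y N by apply: mono_le; [exact: bb_decr| apply: leq_trans (leq_addr _ _)].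
have -> : bb y (n + n) + bb y (m + m) - (bb y (n + m) + bb y (n + m)) =
  bb y (n + n) - bb y (m + m) - ((bb y (n + m) - bb y (m + m)) + (bb y (n + m) - bb y (m + m))) by ring.
rewrite lerBlDr; apply: (le_trans (lerB h2 (lexx _))); rewrite lerDl.
by rewrite addr_ge0 // subr_ge0.
Qed.

Lemma K_bnd x : nsq (KK x) <= 1 * nsq x.
Proof. by rewrite mul1r; apply: le_trans (F3 x) (F2 x). Qed.

Section Z.
Variable zf : H -> H.
Hypothesis hz : forall y, conv (fun n => Kn n y) (zf y).

Lemma zf_lin : linop zf.
Proof.
move=> a x y; apply: (conv_unique hH (hz _)).
have -> : (fun n => Kn n (a *: x + y)) = (fun n => a *: Kn n x + Kn n y).
  by apply: boolp.funext => n; rewrite linKn.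
exact: conv_lin.
Qed.

Lemma zf_fix y : KK (zf y) = zf y.
Proof.
apply: (conv_unique hH (u := fun n => Kn n.+1 y)); last exact: conv_shift (hz y).
apply: (conv_of1 hH (hz y) ler01) => n.
by rewrite /Kn iterS -(linB linK) K_bnd.
Qed.

Lemma As_zf y : As (zf y) = 0.
Proof.
set z := zf y.
have hP : PP z = 0.
  have h := zf_fix y; rewrite -/z /KK in h.
  by apply/eqP; rewrite -oppr_eq0; apply/eqP; apply: (addrI z); rewrite h addr0.
have := ipPl z z; rewrite hP (ip0l hH) => /esym /eqP.
rewrite mulf_eq0 gt_eqF ?cc_gt0 //= => /eqP; exact: (nsq_eq0 hH).
Qed.

Lemma Kn_zf n y : Kn n (zf y) = zf y.
Proof. by elim: n => [|n IH] //; rewrite /Kn iterS -/(Kn n _) IH zf_fix. Qed.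

Lemma zfA x : zf (A x) = 0.
Proof.
set z := zf (A x); apply: (nsq_eq0 hH); apply/le_anti; rewrite (nsq_ge0 hH) andbT.
apply: le_eps; rewrite ?(nsq_real hH) ?real0 // => e e0; rewrite add0r.
have [N hN] := hz (A x) e0; have := hN N (leqnn N); rewrite -/z.
set u := Kn N (A x).
have h1 : ip u z = 0 by rewrite /u selfKn Kn_zf hadj As_zf (ip0r hH).
have h2 : ip z u = 0 by rewrite (ipC hH) h1 conjC0.
rewrite (nsqB hH) h1 h2 addr0 subr0 => lt; apply: ltW; apply: le_lt_trans lt.
by rewrite lerDr (nsq_ge0 hH).
Qed.

Lemma E_bnd y : nsq (y - zf y) <= 2%:R * nsq y.
Proof.
apply: le_eps; rewrite ?(nsq_real hH) ?realM ?(nsq_real hH) ?realn // => e e0.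
have e2 : 0 < e / 2%:R by rewrite divr_gt0.
have [N hN] := hz y e2; have := hN N (leqnn N) => lt.
have h1 : nsq (y - Kn N y) <= nsq y.
  have := Kn_diff y 0 N; rewrite /Kn /= -/(Kn N y) add0n => ->.
  rewrite /bb /= -/(P1.nsq ip y) -/(Kn _ y).
  rewrite lerBlDr lerD2l.
  have := bb_decr y; move/mono_le => /(_ N (N + N)%N (leq_addr _ _)) h.
  by apply: (le_trans h); rewrite lerDr; apply: bb_ge0.
have -> : y - zf y = (y - Kn N y) + (Kn N y - zf y) by rewrite addrA subrK.
apply: (le_trans (nsq_par hH _ _)).
have -> : 2%:R * nsq y + e = 2%:R * (nsq y + e / 2%:R) by field.
by apply: ler_wpM2l => //; apply: lerD => //; apply: ltW.
Qed.

Section BB.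
Variable B : H -> H.
Hypothesis lB : linop B.
Variable kB : C.
Hypothesis kB0 : 0 <= kB.
Hypothesis hkB : forall x, nsq (B x) <= kB * nsq x.

Definition CC y := B (y - zf y).

Lemma CC_lin : linop CC.
Proof.
move=> a x y; rewrite /CC zf_lin -lB; congr B.
by rewrite scalerBr opprD addrACA.
Qed.

Lemma CC_bounded : bounded_operator ip CC.
Proof.
apply: (@mk_bounded _ _ _ hH _ (1 + 2%:R * kB) CC_lin).
  by rewrite addr_ge0 // mulr_ge0.
move=> x; apply: (le_trans (hkB _)).
apply: (le_trans (ler_wpM2l kB0 (E_bnd x))).
rewrite mulrA; apply: ler_wpM2r; first exact: (nsq_ge0 hH).
have -> : (1 + 2%:R * kB) ^+ 2 = kB * 2%:R + (1 + 2%:R * kB + 4%:R * kB ^+ 2) by ring.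
by rewrite lerDl addr_ge0 ?mulr_ge0 ?exprn_ge0 // addr_ge0 ?mulr_ge0.
Qed.

Lemma CC_conv y : conv (fun n => B (y - Kn n y)) (CC y).
Proof.
have h : conv (fun n => y - Kn n y) (y - zf y).
  have := conv_lin hH (-1) (hz y) (conv_const hH y).
  have -> : (fun n => (-1) *: Kn n y + y) = (fun n => y - Kn n y).
    by apply: boolp.funext => n; rewrite scaleN1r addrC.
  by rewrite scaleN1r addrC.
apply: (conv_of1 hH h kB0) => n; rewrite /CC -(linB lB); exact: hkB.
Qed.

Lemma CC_A x : CC (A x) = B (A x).
Proof. by rewrite /CC zfA subr0. Qed.

End BB.
End Z.

Lemma Kn_S n y : y - Kn n y = PP (Sn n y).
Proof.
elim: n => [|n IH] /=; first by rewrite /Kn /= subrr /PP (lin0 lAs) (lin0 lA) scaler0.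
rewrite (linD linP) PK -IH (linB linK) {2}/KK.
by rewrite addrA [PP y + _]addrC subrK.
Qed.

Section Mem.
Variable M : set (H -> H).
Hypothesis hM : von_neumann_algebra ip M.
Hypothesis MA : M A.
Hypothesis MAs : M As.

Lemma memK : M KK.
Proof.
have := vn_add hM (vn_id hM) (vn_scale hM (- cc) (vn_mul hM MA MAs)).
congr M; apply: boolp.funext => y /=; by rewrite /KK /PP scaleNr.
Qed.

Lemma memKn n : M (Kn n).
Proof.
elim: n => [|n IH].
  by have := vn_id hM; congr M; apply: boolp.funext => y.
by have := vn_mul hM memK IH; congr M; apply: boolp.funext => y.
Qed.

Lemma memSn n : M (Sn n).
Proof.
elim: n => [|n IH].
  by have := vn_scale hM 0 (vn_id hM); congr M; apply: boolp.funext => y; rewrite scale0r.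
by have := vn_add hM (vn_id hM) (vn_mul hM memK IH); congr M; apply: boolp.funext => y.
Qed.

Lemma Cn_M1 (B : H -> H) n : M B -> M (fun y => B (y - Kn n y)).
Proof.
move=> MB.
have := vn_mul hM MB (vn_add hM (vn_id hM) (vn_scale hM (-1) (memKn n))).
congr M; apply: boolp.funext => y /=; by rewrite scaleN1r.
Qed.

Lemma Cn_M2 (B : H -> H) n : linop B -> M (B \o A) -> M (fun y => B (y - Kn n y)).
Proof.
move=> lB MBA.
have := vn_scale hM cc (vn_mul hM MBA (vn_mul hM MAs (memSn n))).
congr M; apply: boolp.funext => y /=; by rewrite Kn_S /PP (linZ lB).
Qed.
End Mem.

Lemma key (M1 M2 : set (H -> H)) (B : H -> H) :
  von_neumann_algebra ip M1 -> von_neumann_algebra ip M2 -> M1 A -> M1 As ->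
  M2 A -> M2 As -> M1 B -> M2 (B \o A) ->
  exists2 Cop, (M1 `&` M2)%classic Cop & Cop \o A = B \o A.
Proof.
move=> h1 h2 A1 As1 A2 As2 MB MBA.
have [zf hz] := boolp.choice Kn_cauchy.
have bB := vn_bounded h1 MB; have lB := bnd_lin bB.
have [kB [kB0 hkB]] := bnd_sq hH bB.
exists (CC zf B); last by apply: boolp.funext => x /=; rewrite CC_A.
split.
  apply: (vn_so_closed h1); first exact: (CC_bounded hz lB kB0 hkB).
  apply: (so_approx hH (F := fun n y => B (y - Kn n y))).
    by move=> y; apply: (CC_conv hz lB kB0 hkB).
  by move=> n; apply: (Cn_M1 h1 A1 As1).
apply: (vn_so_closed h2); first exact: (CC_bounded hz lB kB0 hkB).
apply: (so_approx hH (F := fun n y => B (y - Kn n y))).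
  by move=> y; apply: (CC_conv hz lB kB0 hkB).
by move=> n; apply: (Cn_M2 h2 A2 As2).
Qed.

End Op.


End P4.
Import P4.

Unset Implicit Arguments.
Set Strict Implicit.
Set Printing Implicit Defensive.
Local Open Scope ring_scope.
Local Open Scope classical_set_scope.
Import Order.TTheory GRing.Theory Num.Theory.


Lemma adj_unique (R : realType) (H : lmodType (R[i])%C)
  (ip : H -> H -> (R[i])%C) (hH : is_hilbert_space ip) (A S1 S2 : H -> H) :
  is_adjoint ip A S1 -> is_adjoint ip A S2 -> S1 = S2.
Proof.
move=> a1 a2; apply: boolp.funext => y; apply/eqP; rewrite -subr_eq0; apply/eqP.
apply: (nsq_eq0 hH); rewrite /nsq (ipBr hH) -a1 -a2 subrr //.
Qed.

Theorem proposition3p9 (R : realType) (H : lmodType (R[i])%C)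
  (ip : H -> H -> (R[i])%C) (hH : is_hilbert_space ip)
  (R1 R2 : set (H -> H))
  (hR1 : von_neumann_algebra ip R1) (hR2 : von_neumann_algebra ip R2)
  (A : H -> H) (hA : (R1 `&` R2) A) :
  rmul_set R1 A `&` R2 = rmul_set R1 A `&` rmul_set R2 A /\
  rmul_set R1 A `&` rmul_set R2 A = rmul_set (R1 `&` R2) A.
Proof.
move: hA => [hA1 hA2].
have [S1 MS1 adj1] := vn_adj hR1 hA1.
have [S2 MS2 adj2] := vn_adj hR2 hA2.
have eS := adj_unique _ _ _ hH _ _ _ adj1 adj2; subst S2.
have bA := vn_bounded hR1 hA1; have bS := vn_bounded hR1 MS1.
have [kA [kA0 hkA]] := bnd_sq hH bA.
have [kS [kS0 hkS]] := bnd_sq hH bS.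
have key' : forall T, rmul_set R1 A T -> R2 T -> rmul_set (R1 `&` R2) A T.
  move=> T [B MB <-] MT.
  have [Cop hC e] := key hH adj1 (bnd_lin bA) (bnd_lin bS) kA0 kS0 hkA hkS
     hR1 hR2 hA1 MS1 hA2 MS2 MB MT.
  by exists Cop.
have sub1 : rmul_set (R1 `&` R2) A `<=` R2.
  by move=> T [Cop [_ C2] <-]; apply: (vn_mul hR2).
have sub2 : rmul_set R2 A `<=` R2.
  by move=> T [Cop C2 <-]; apply: (vn_mul hR2).
split; apply/seteqP; split => T /=.
- move=> [h1 h2]; split => //.
  by have [Cop [_ C2] e] := key' T h1 h2; exists Cop.
- by move=> [h1 h2]; split => //; apply: sub2.
- by move=> [h1 h2]; apply: key' => //; apply: sub2.
- move=> h; split; last by case: h => Cop [C1 C2] e; exists Cop.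
  by case: h => Cop [C1 C2] e; exists Cop.
Qed.
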